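(* Let $\Re$ be a commutative Krasner hyperring with identity $1\ne 0$, let $\phi:L(\Re)\to L(\Re)\cup\{\emptyset\}$ be a function, and let $T$ be a proper hyperideal of $\Re$ that is $\phi$-prime. If $T$ is not prime, then $T^2\subseteq\phi(T)$. Equivalently, if $T^2\not\subseteq\phi(T)$, then $T$ is prime.
   Context: Krasner hyperring: $(\Re,\oplus)$ canonical hypergroup (associative commutative hyperoperation, scalar zero $0$, unique inverses, reversibility), $(\Re,\circ)$ commutative semigroup with identity $1\ne0$, $0$ absorbing, $\circ$ distributive over $\oplus$. Hyperideals: nonempty $N$ with $a\oplus(-b)\subseteq N$, $r\circ a\in N$; $L(\Re)$ is the set of hyperideals; $T^2$ is the hyperideal generated by $\{a\circ b: a,b\in T\}$. $T$ is prime if $a\circ b\in T$ implies $a\in T$ or $b\in T$; $T$ is $\phi$-prime if $a\circ b\in T$ and $a\circ b\notin\phi(T)$ imply $a\in T$ or $b\in T$. *)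

(* Defs.v *)
From Stdlib Require Import Classical.

Set Implicit Arguments.

Definition set (R : Type) := R -> Prop.
Definition subset {R : Type} (A B : set R) : Prop := forall x, A x -> B x.

Definition hset_l {R : Type} (hadd : R -> R -> set R) (X : set R) (c : R) : set R :=
  fun z => exists x, X x /\ hadd x c z.
Definition hset_r {R : Type} (hadd : R -> R -> set R) (a : R) (Y : set R) : set R :=
  fun z => exists y, Y y /\ hadd a y z.

Record KrasnerHyperring := {
  carrier :> Type;
  hadd : carrier -> carrier -> set carrier;
  hzero : carrier;
  hneg : carrier -> carrier;
  hmul : carrier -> carrier -> carrier;
  hone : carrier;
  hadd_nonempty : forall a b, exists z, hadd a b z;
  hadd_assoc : forall a b c,
      hset_l hadd (hadd a b) c = hset_r hadd a (hadd b c);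
  hadd_comm : forall a b, hadd a b = hadd b a;
  hadd_zero : forall a z, hadd a hzero z <-> z = a;
  hneg_inv : forall a, hadd a (hneg a) hzero;
  hneg_unique : forall a b, hadd a b hzero -> b = hneg a;
  hadd_rev : forall a b c, hadd a b c -> hadd c (hneg b) a;
  hmul_assoc : forall a b c, hmul a (hmul b c) = hmul (hmul a b) c;
  hmul_comm : forall a b, hmul a b = hmul b a;
  hmul_one : forall a, hmul hone a = a;
  hmul_zero : forall a, hmul hzero a = hzero;
  hone_neq_zero : hone <> hzero;
  (* distributivity: a o (b (+) c) = (a o b) (+) (a o c) *)
  hmul_distr : forall a b c z,
      (exists w, hadd b c w /\ z = hmul a w) <-> hadd (hmul a b) (hmul a c) z
}.

Section Ideals.
Context {R : KrasnerHyperring}.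

Definition hyperideal (N : set R) : Prop :=
  (exists x, N x) /\
  (forall a b, N a -> N b -> subset (hadd R a (hneg R b)) N) /\
  (forall r a, N a -> N (hmul R r a)).

Definition proper (T : set R) : Prop := exists x, ~ T x.

Definition hsq (T : set R) : set R :=
  fun x => forall N, hyperideal N ->
    (forall a b, T a -> T b -> N (hmul R a b)) -> N x.

Definition prime (T : set R) : Prop :=
  forall a b, T (hmul R a b) -> T a \/ T b.

(* phi : L(R) -> L(R) u {emptyset}: a map on sets sending hyperideals to
   hyperideals or to the empty set. *)
Definition phi_map (phi : set R -> set R) : Prop :=
  forall I, hyperideal I -> hyperideal (phi I) \/ (forall x, ~ phi I x).

Definition phi_prime (phi : set R -> set R) (T : set R) : Prop :=
  forall a b, T (hmul R a b) -> ~ phi T (hmul R a b) -> T a \/ T b.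
End Ideals.

(* Main.v *)
Require Import Defs.
From Stdlib Require Import Classical.

Section H.
Arguments hadd_rev {k a b c}.
Variable R : KrasnerHyperring.

Lemma negneg (c : R) : hneg R (hneg R c) = c.
Proof.
  symmetry. apply hneg_unique. rewrite hadd_comm. apply hneg_inv.
Qed.

Lemma id_zero {N : set R} : hyperideal N -> N (hzero R).
Proof.
  intros [[x Hx] [Hs _]]. exact (Hs x x Hx Hx _ (hneg_inv R x)).
Qed.

Lemma id_neg {N : set R} {c} : hyperideal N -> N c -> N (hneg R c).
Proof.
  intros HN Hc. pose proof (id_zero HN) as H0. destruct HN as [_ [Hs _]].
  apply (Hs _ _ H0 Hc). rewrite hadd_comm. apply hadd_zero. reflexivity.
Qed.

Lemma id_add {N : set R} {x y z} : hyperideal N -> N x -> N y -> hadd R x y z -> N z.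
Proof.
  intros HN Hx Hy Hz. pose proof (id_neg HN Hy) as Hny. destruct HN as [_ [Hs _]].
  apply (Hs _ _ Hx Hny). rewrite negneg. exact Hz.
Qed.

Lemma id_mul {N : set R} r {a} : hyperideal N -> N a -> N (hmul R r a).
Proof. intros [_ [_ Hm]]. apply Hm. Qed.

Lemma rev' {x y z : R} : hadd R x y z -> hadd R z (hneg R x) y.
Proof. intros H. apply hadd_rev. rewrite hadd_comm. exact H. Qed.

Lemma distr (a : R) {b c w : R} : hadd R b c w -> hadd R (hmul R a b) (hmul R a c) (hmul R a w).
Proof. intros H. apply hmul_distr. exists w. auto. Qed.

Lemma step1 {phi : set R -> set R} {T : set R} {a b t} :
  hyperideal T -> hyperideal (phi T) -> phi_prime phi T ->
  T (hmul R a b) -> phi T (hmul R a b) -> ~ T a -> ~ T b -> T t ->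
  phi T (hmul R a t).
Proof.
  intros HT HP Hpp Hab Pab Na Nb Ht.
  destruct (classic (phi T (hmul R a t))) as [|Hn]; [assumption|exfalso].
  destruct (hadd_nonempty R b t) as [z Hz].
  pose proof (distr a Hz) as Haz.
  assert (Tz : T (hmul R a z)).
  { apply (id_add HT Hab (id_mul a HT Ht) Haz). }
  assert (Pz : ~ phi T (hmul R a z)).
  { intro Pz. apply Hn. rewrite hadd_comm in Haz.
    exact (id_add HP Pz (id_neg HP Pab) (hadd_rev Haz)). }
  destruct (Hpp _ _ Tz Pz) as [|Tz']; [contradiction|].
  apply Nb. exact (id_add HT Tz' (id_neg HT Ht) (hadd_rev Hz)).
Qed.
End H.
Arguments hadd_rev {k a b c}.
Arguments distr {R} a {b c w}.
Arguments id_mul {R N} r {a}.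
Arguments id_add {R N x y z}.
Arguments id_neg {R N c}.
Arguments rev' {R x y z}.
Arguments step1 {R phi T a b t}.

Theorem mainTheorem6 (R : KrasnerHyperring) (phi : set R -> set R) (T : set R) :
  phi_map phi -> hyperideal T -> proper T -> phi_prime phi T ->
  ~ prime T -> subset (hsq T) (phi T).
Proof.
  intros Hphi HT _ Hpp Hnp.
  assert (exists a b, T (hmul R a b) /\ ~ T a /\ ~ T b) as [a [b [Hab [Na Nb]]]].
  { apply NNPP. intro H. apply Hnp. intros a b Hab.
    destruct (classic (T a)); auto. destruct (classic (T b)); auto.
    exfalso. apply H. eauto. }
  assert (Pab : phi T (hmul R a b)).
  { apply NNPP. intro P. destruct (Hpp a b Hab P); contradiction. }
  assert (HP : hyperideal (phi T)).
  { destruct (Hphi T HT) as [|E]; [assumption|]. exfalso. exact (E _ Pab). }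
  assert (Hba : T (hmul R b a)) by (rewrite hmul_comm; exact Hab).
  assert (Pba : phi T (hmul R b a)) by (rewrite hmul_comm; exact Pab).
  intros x Hx. apply Hx; [exact HP|].
  intros s t Hs Ht.
  apply NNPP. intro Hn.
  destruct (hadd_nonempty R a s) as [z Hz].
  destruct (hadd_nonempty R b t) as [w Hw].
  pose proof (distr z Hw) as Hzw.
  pose proof (distr b Hz) as Hbz.
  rewrite (hmul_comm R b a), (hmul_comm R b s), (hmul_comm R b z) in Hbz.
  pose proof (distr t Hz) as Htz.
  rewrite (hmul_comm R t a), (hmul_comm R t s), (hmul_comm R t z) in Htz.
  assert (Psb : phi T (hmul R s b)).
  { rewrite hmul_comm. exact (step1 HT HP Hpp Hba Pba Nb Na Hs). }
  assert (Pat : phi T (hmul R a t)) by exact (step1 HT HP Hpp Hab Pab Na Nb Ht).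
  assert (Pzb : phi T (hmul R z b)) by exact (id_add HP Pab Psb Hbz).
  assert (Tzb : T (hmul R z b)).
  { apply (id_add HT Hab (id_mul b HT Hs)). rewrite (hmul_comm R b s) in *. exact Hbz. }
  assert (Tzw : T (hmul R z w)).
  { exact (id_add HT Tzb (id_mul z HT Ht) Hzw). }
  assert (Pzw : ~ phi T (hmul R z w)).
  { intro Pzw. apply Hn.
    pose proof (id_add HP Pzw (id_neg HP Pzb) (rev' Hzw)) as Pzt.
    exact (id_add HP Pzt (id_neg HP Pat) (rev' Htz)). }
  destruct (Hpp _ _ Tzw Pzw) as [Tz|Tw].
  - apply Na.
    exact (id_add HT Tz (id_neg HT Hs) (hadd_rev Hz)).
  - apply Nb. exact (id_add HT Tw (id_neg HT Ht) (hadd_rev Hw)).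
Qed.
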